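(* Let $\mathbb{F}$ be a field and $n,r$ integers with $0<r\le n$ and $r$ even, and assume $|\mathbb{F}|>\frac{r}{2}+1$. Let $J_K := \begin{bmatrix} K & 0 \\ 0 & 0 \end{bmatrix}$ and $M = \begin{bmatrix} A & B \\ -B^T & D \end{bmatrix}$ be elements of $A_n(\mathbb{F})$, with $A,K\in A_r(\mathbb{F})$, $B\in M_{r,n-r}(\mathbb{F})$, $D\in A_{n-r}(\mathbb{F})$, and assume that $K$ is invertible. If $J_K+tM$ has rank at most $r$ for all $t\in\mathbb{F}$, then $D=0$ and $B^TK^{-1}(AK^{-1})^kB=0$ for every integer $k\ge 0$.
   Context: $A_m(\mathbb{F})$ denotes the space of $m\times m$ alternating matrices, i.e. matrices $X\in M_m(\mathbb{F})$ with $Y^TXY=0$ for all $Y\in\mathbb{F}^m$. The field may have characteristic 2. *)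

(* Defs.v *)
From mathcomp Require Import all_boot all_order all_algebra.
Set Implicit Arguments. Unset Strict Implicit. Unset Printing Implicit Defensive.
Import GRing.Theory.
Local Open Scope ring_scope.

Definition alternating (F : fieldType) (m : nat) (X : 'M[F]_m) : Prop :=
  forall y : 'cV[F]_m, y^T *m X *m y = 0.

(* |F| > k, stated so as to cover infinite fields: F has at least k+1
   pairwise distinct elements. *)
Definition card_gt (F : fieldType) (k : nat) : Prop :=
  exists s : seq F, uniq s /\ size s = k.+1.

(* Main.v *)
Require Import Defs.
From mathcomp Require Import all_boot all_order all_algebra all_fingroup.
Import GRing.Theory.
Local Open Scope ring_scope.
Set Implicit Arguments. Unset Strict Implicit. Unset Printing Implicit Defensive.

Section Alt.
Variable L : fieldType.

Definition altE n (X : 'M[L]_n) :=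
  (forall i, X i i = 0) /\ (forall i j, X j i = - X i j).

Lemma quad_delta n (X : 'M[L]_n) i j :
  (delta_mx i 0 : 'cV[L]_n)^T *m X *m delta_mx j 0 = (X i j)%:M.
Proof.
rewrite trmx_delta -rowE -colE.
by apply/matrixP => a b; rewrite !ord1 !mxE /= mulr1n.
Qed.

Lemma quadD n (X : 'M[L]_n) (u v : 'cV[L]_n) :
  (u + v)^T *m X *m (u + v) = u^T *m X *m u + v^T *m X *m u + (u^T *m X *m v + v^T *m X *m v).
Proof. by rewrite mulmxDr [(u + v)^T]linearD /= !mulmxDl. Qed.

Lemma tr11 (Z : 'M[L]_1) : Z^T = Z.
Proof. by apply/matrixP => a b; rewrite !ord1 mxE. Qed.

Lemma alt_altE n (X : 'M[L]_n) : alternating X -> altE X.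
Proof.
move=> H; have diag i : X i i = 0.
  by have := H (delta_mx i 0); rewrite quad_delta => /matrixP /(_ 0 0); rewrite !mxE /= mulr1n.
split=> // i j.
have := H (delta_mx i 0 + delta_mx j 0).
rewrite quadD !quad_delta !diag => /matrixP /(_ 0 0).
rewrite !mxE /= !mulr1n add0r addr0 => /eqP; rewrite addr_eq0 => /eqP. done.
Qed.

Lemma altE_alt n (X : 'M[L]_n) : altE X -> alternating X.
Proof.
move=> [d a] y.
pose U := \matrix_(i, j) (if (i < j)%N then X i j else 0) : 'M[L]_n.
have -> : X = U - U^T.
  apply/matrixP => i j; rewrite !mxE.
  case: (ltngtP i j) => [lt|gt|eq]; first by rewrite subr0.
    by rewrite sub0r (a i j) opprK.
  by rewrite (val_inj eq) d subrr.
rewrite mulmxBr mulmxBl.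
have -> : y^T *m U^T *m y = (y^T *m U *m y)^T.
  by rewrite !trmx_mul trmxK mulmxA.
by rewrite tr11 subrr.
Qed.

Lemma alternatingP n (X : 'M[L]_n) : alternating X <-> altE X.
Proof. by split; [apply: alt_altE | apply: altE_alt]. Qed.

End Alt.

Lemma map_alternating (F L : fieldType) (f : {rmorphism F -> L}) n (X : 'M[F]_n) :
  alternating X -> alternating (map_mx f X).
Proof.
move=> /alternatingP [d a]; apply/alternatingP; split=> [i|i j]; rewrite !mxE.
  by rewrite d rmorph0.
by rewrite a rmorphN.
Qed.

Lemma det22 (R : comNzRingType) (A : 'M[R]_2) : \det A = A 0 0 * A 1 1 - A 0 1 * A 1 0.
Proof.
rewrite (expand_det_row _ 0) !big_ord_recl big_ord0 /cofactor !det_mx11 !mxE /=.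
have e1 : lift 0 (0 : 'I_1) = 1 :> 'I_2 by apply/val_inj.
have e2 : lift ord0 (ord0 : 'I_1) = 1 :> 'I_2 by apply/val_inj.
have e3 : lift (1 : 'I_2) (0 : 'I_1) = 0 :> 'I_2 by apply/val_inj.
have e4 : (ord0 : 'I_2) = 0 by apply/val_inj.
rewrite ?e1 ?e2 ?e3 ?e4 ?e3.
by rewrite addr0 expr0 mul1r /bump /= expr1 mulN1r mulrN.
Qed.

Section Sq.
Variable L : fieldType.

Lemma schur_det p q (P : 'M[L]_p) (Q : 'M[L]_(p,q)) (R : 'M[L]_(q,p)) (S : 'M[L]_q) :
  P \in unitmx -> \det (block_mx P Q R S) = \det P * \det (S - R *m invmx P *m Q).
Proof.
move=> uP.
have -> : block_mx P Q R S =
   block_mx 1%:M 0 (R *m invmx P) 1%:M *m block_mx P Q 0 (S - R *m invmx P *m Q).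
  rewrite mulmx_block !mul1mx !mul0mx !addr0 -mulmxA mulVmx // mulmx1.
  by rewrite addrC subrK.
by rewrite det_mulmx det_lblock det_ublock !det1 !mul1r.
Qed.

Lemma schur_alt p q (X : 'M[L]_(p + q)) :
  alternating X -> ulsubmx X \in unitmx ->
  alternating (drsubmx X - dlsubmx X *m invmx (ulsubmx X) *m ursubmx X).
Proof.
move=> H uP y.
have := H (col_mx (- (invmx (ulsubmx X) *m ursubmx X *m y)) y).
rewrite -mulmxA -[in X in _ *m (X *m _)](submxK X) mul_block_col tr_col_mx mul_row_col.
rewrite mulmxN !mulmxA mulmxV // mul1mx addNr mulmx0 add0r.
move=> H0; rewrite -{}H0 -mulmxA mulmxBl mulmxN !mulmxA addrC.
by [].
Qed.

Lemma perm01 k (i j : 'I_k.+2) : i != j -> exists s : 'S_k.+2, s 0 = i /\ s 1 = j.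
Proof.
move=> ij.
pose s1 := tperm 0 i; pose j' := s1 j; pose s2 := tperm 1 j'.
exists (s2 * s1)%g; rewrite !permM; split.
  rewrite (tpermD (x := 1)) ?tpermL //.
  rewrite /j' /s1; apply/eqP => /(congr1 (tperm 0 i)); rewrite tpermK tpermL.
  by move=> ji; move: ij; rewrite ji eqxx.
by rewrite tpermL /j' tpermK.
Qed.

Lemma alt_det_sq n (X : 'M[L]_n) : alternating X -> exists s, \det X = s ^+ 2.
Proof.
elim/ltn_ind: n X => n IH X HX.
case: n IH X HX => [|[|k]] IH X HX.
- by exists 1; rewrite det_mx00 expr1n.
- have /alternatingP [dg _] := HX.
  by exists 0; rewrite det_mx11 dg expr0n.
have [X0 | Xn0] := eqVneq X 0.
  by exists 0; rewrite X0 det0 expr0n.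
have : [exists i, exists j, X i j != 0].
  apply: contraNT Xn0 => /existsPn H; apply/eqP/matrixP => i j.
  by move/existsPn: (H i) => /(_ j); rewrite mxE negbK => /eqP.
move=> /existsP [i /existsP [j nz]].
have /alternatingP [dg asym] := HX.
have ij : i != j by apply: contraNneq nz => ->; rewrite dg.
have [s [s0 s1]] := perm01 ij.
pose X' := row_perm s (col_perm s X).
have X'E a b : X' a b = X (s a) (s b) by rewrite !mxE.
have dX : \det X' = \det X.
  rewrite /X' row_permE col_permE !det_mulmx mulrCA -det_mulmx -perm_mxM mulgV.
  by rewrite perm_mx1 det1 mulr1.
have aX' : alternating X'.
  by apply/alternatingP; split=> [a|a b]; rewrite !X'E ?dg // asym.
pose Y : 'M[L]_(2 + k) := X'.
have aY : alternating Y by [].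
pose P := ulsubmx Y.
have PE a b : P a b = X (s (lshift k a)) (s (lshift k b)) by rewrite !mxE.
have l0 : lshift k (0 : 'I_2) = 0 :> 'I_k.+2 by apply/val_inj.
have l1 : lshift k (1 : 'I_2) = 1 :> 'I_k.+2 by apply/val_inj.
have dP : \det P = X i j ^+ 2.
  rewrite det22 !PE !l0 !l1 s0 s1 !dg (asym i j) mul0r sub0r mulrN opprK.
  by rewrite expr2.
have uP : P \in unitmx by rewrite unitmxE dP unitfE expf_neq0.
have [sg Hsg] := IH k (leqW (ltnSn k)) _ (schur_alt aY uP).
exists (X i j * sg).
rewrite -dX -/Y.
have -> : \det Y = \det (block_mx (ulsubmx Y) (ursubmx Y) (dlsubmx Y) (drsubmx Y)).
  by rewrite submxK.
by rewrite schur_det // -/P dP Hsg exprMn.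
Qed.

End Sq.

Lemma frac_rep (R : idomainType) (x : {fraction R}) :
  exists p q : R, q != 0 /\ x * (tofrac q) = tofrac p.
Proof.
elim/quotW: x => -[[n d] /= dP].
exists n, d; split => //.
rewrite /tofrac; unlock.
rewrite -[_ * _]FracField.pi_mul.
apply/eqmodP.
rewrite /= FracField.equivfE /FracField.mulf /=.
rewrite !numer_Ratio ?denom_Ratio ?mulf_neq0 ?oner_neq0 //=.
by rewrite !mulr1 mulrC.
Qed.

Section PolySq.
Variable F : fieldType.
Implicit Types p q d : {poly F}.

Lemma frac_sq d : (exists s : {fraction {poly F}}, tofrac d = s ^+ 2) ->
  exists p q, q != 0 /\ d * q ^+ 2 = p ^+ 2.
Proof.
move=> [s Hs]; have [p [q [q0 Hpq]]] := frac_rep s.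
exists p, q; split => //; apply/eqP; rewrite -tofrac_eq !rmorphXn rmorphM /= Hs.
by rewrite rmorphXn -exprMn Hpq.
Qed.

Lemma root_sq p c : root (p ^+ 2) c -> root p c.
Proof. by rewrite expr2 rootM orbb. Qed.

Lemma sq_root2 q p d c : q != 0 -> d * q ^+ 2 = p ^+ 2 -> root d c ->
  ('X - c%:P) ^+ 2 %| d.
Proof.
have [n] := ubnP (size q); elim: n q p d => // n IH q p d ltqn q0 E rd.
set l := 'X - c%:P.
have l0 : l != 0 by rewrite polyXsubC_eq0.
have rp : root p c by apply: root_sq; rewrite -E rootM rd.
have [p1 Ep] := factor_theorem _ _ rp.
have [rq | nrq] := boolP (root q c).
  have [q1 Eq] := factor_theorem _ _ rq.
  have q10 : q1 != 0 by apply: contraNneq q0 => q10; rewrite Eq q10 mul0r.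
  apply: (IH q1 p1) => //.
    move: ltqn; rewrite Eq size_mul // size_XsubC addn2 /= ltnS; exact.
  have ln2 : l ^+ 2 != 0 by rewrite expf_neq0.
  apply: (mulIf ln2).
  by rewrite -mulrA -exprMn -Eq E Ep exprMn.
have [d1 Ed] := factor_theorem _ _ rd.
have E1 : d1 * q ^+ 2 = p1 ^+ 2 * l.
  apply: (mulIf l0).
  by rewrite -mulrA (mulrC _ l) mulrA -Ed E Ep exprMn expr2 mulrA.
have rd1 : root d1 c.
  have : root (d1 * q ^+ 2) c by rewrite E1 rootM /l root_XsubC eqxx orbT.
  by rewrite rootM => /orP [//|/root_sq]; rewrite (negbTE nrq).
have [d2 Ed1] := factor_theorem _ _ rd1.
by apply/dvdpP; exists d2; rewrite Ed Ed1 -mulrA -expr2.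
Qed.

Lemma count_roots (S : seq F) d p q : uniq S -> all (root d) S -> d != 0 ->
  q != 0 -> d * q ^+ 2 = p ^+ 2 -> (2 * size S < size d)%N.
Proof.
elim: S d p q => [|c S IH] d p q /=.
  by move=> _ _ d0 _ _; rewrite muln0 size_poly_gt0.
move=> /andP [cS uS] /andP [rd aS] d0 q0 E.
set l := 'X - c%:P.
have l0 : l != 0 by rewrite polyXsubC_eq0.
have [d2 Ed] := dvdpP _ _ (sq_root2 q0 E rd).
have rp : root p c by apply: root_sq; rewrite -E rootM rd.
have [p1 Ep] := factor_theorem _ _ rp.
have d20 : d2 != 0 by apply: contraNneq d0 => d20; rewrite Ed d20 mul0r.
have E2 : d2 * q ^+ 2 = p1 ^+ 2.
  have ln2 : l ^+ 2 != 0 by rewrite expf_neq0.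
  apply: (mulIf ln2).
  by rewrite mulrAC -Ed E Ep exprMn.
have aS2 : all (root d2) S.
  apply/allP => x xS; have := allP aS x xS; rewrite Ed rootM => /orP [//|].
  rewrite root_exp_XsubC => /eqP xc; by move: cS; rewrite -xc xS.
have := IH d2 p1 q uS aS2 d20 q0 E2.
rewrite Ed size_mul ?expf_neq0 // size_exp_XsubC addn3 mulnS /= !ltnS; exact.
Qed.

End PolySq.

Lemma sel_entry (T : pzRingType) m (g : 'I_2 -> 'I_m) (Z : 'M[T]_m) a b :
  ((colsub g 1%:M)^T *m Z *m colsub g 1%:M) a b = Z (g a) (g b).
Proof.
by rewrite trmx_mxsub trmx1 mul_rowsub_mx mul1mx mulmx_colsub mulmx1 !mxE.
Qed.

Section FLevel.
Variable F : fieldType.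

Lemma congr_alt n p (X : 'M[F]_n) (W : 'M[F]_(n, p)) :
  alternating X -> alternating (W^T *m X *m W).
Proof. by move=> H y; have := H (W *m y); rewrite trmx_mul !mulmxA. Qed.

Lemma quad_block p q (X : 'M[F]_(p + q)) (u : 'cV_p) (v : 'cV_q) :
  (col_mx u v)^T *m X *m col_mx u v =
  u^T *m ulsubmx X *m u + v^T *m dlsubmx X *m u +
  (u^T *m ursubmx X *m v + v^T *m drsubmx X *m v).
Proof.
rewrite -{1}[X]submxK tr_col_mx mul_row_block mul_row_col !mulmxDl.
by [].
Qed.

Lemma alt_J r m (K : 'M[F]_r) : alternating K ->
  alternating (block_mx K (0 : 'M_(r, m)) 0 (0 : 'M_m)).
Proof.
move=> HK y; rewrite -[y]vsubmxK quad_block block_mxKul block_mxKdl block_mxKur block_mxKdr.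
by rewrite HK !mulmx0 !mul0mx !addr0.
Qed.

Lemma alt_M r m (A : 'M[F]_r) (B : 'M[F]_(r, m)) (D : 'M[F]_m) :
  alternating A -> alternating D ->
  alternating (block_mx A B (- B^T) D).
Proof.
move=> HA HD y; rewrite -[y]vsubmxK quad_block block_mxKul block_mxKdl block_mxKur block_mxKdr.
set u := usubmx y; set v := dsubmx y.
rewrite HA HD add0r addr0 mulmxN mulNmx.
have -> : v^T *m B^T *m u = (u^T *m B *m v)^T by rewrite !trmx_mul trmxK mulmxA.
by rewrite tr11 addNr.
Qed.

Lemma det_rank_le r (X : 'M[F]_(r + 2)) : (\rank X <= r)%N -> \det X = 0.
Proof.
move=> H; apply/eqP; apply: contraTT H => H.
have uX : X \in unitmx by rewrite unitmxE unitfE.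
by rewrite mxrank_unit // -ltnNge addn2.
Qed.

Lemma blk_congr r m (V : 'M[F]_(m, 2)) (K A : 'M[F]_r) (B : 'M[F]_(r, m)) (D : 'M[F]_m) t :
  (block_mx 1%:M 0 0 V)^T *m (block_mx K 0 0 0 + t *: block_mx A B (- B^T) D) *m
     block_mx 1%:M 0 0 V
  = block_mx K 0 0 (0 : 'M_2) + t *: block_mx A (B *m V) (- (B *m V)^T) (V^T *m D *m V).
Proof.
rewrite tr_block_mx trmx1 !trmx0 scale_block_mx add_block_mx.
rewrite !mulmx_block !mul1mx !mul0mx !mulmx0 !mulmx1 !addr0 !add0r.
rewrite scale_block_mx add_block_mx !add0r.
by rewrite -!scalemxAr -!scalemxAl trmx_mul mulmxN.
Qed.

End FLevel.

Lemma map_mxX (R S : comNzRingType) (f : {rmorphism R -> S}) n (M : 'M[R]_n) k :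
  map_mx f (M ^+ k) = (map_mx f M) ^+ k.
Proof.
elim: k => [|k IH]; first by rewrite !expr0 -!idmxE map_mx1.
by rewrite !exprS -!mulmxE map_mxM IH.
Qed.

Lemma exprM_swap (T : pzRingType) (x y : T) k : (x * y) ^+ k * x = x * (y * x) ^+ k.
Proof.
elim: k => [|k IH]; first by rewrite !expr0 mul1r mulr1.
by rewrite exprSr -mulrA -(mulrA x y x) mulrA IH -mulrA -exprSr.
Qed.

Lemma scale_eq0_mx (R : idomainType) n1 n2 (c : R) (M : 'M[R]_(n1, n2)) :
  c != 0 -> c *: M = 0 -> M = 0.
Proof.
move=> c0 /matrixP H; apply/matrixP => a b; move: (H a b); rewrite !mxE.
by move=> /eqP; rewrite mulf_eq0 (negbTE c0) /= => /eqP.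
Qed.

Lemma stepF (F : fieldType) r m (A K : 'M[F]_r) (B : 'M[F]_(r, m)) (D : 'M[F]_m) :
  K \in unitmx ->
  \det (map_mx polyC K + 'X *: map_mx polyC A) *: map_mx polyC D +
    'X *: ((map_mx polyC B)^T *m \adj (map_mx polyC K + 'X *: map_mx polyC A)
            *m map_mx polyC B) = 0 ->
  D = 0 /\ forall k, B^T *m invmx K *m (A *m invmx K) ^+ k *m B = 0.
Proof.
move=> uK.
set Pp := (map_mx polyC K + _ *: map_mx polyC A); set dl := \det Pp; set Bp := map_mx polyC B.
move=> H.
have ev0C n1 n2 (M : 'M[F]_(n1, n2)) : map_mx (horner_eval 0) (map_mx polyC M) = M.
  by rewrite -map_mx_comp map_mx_id // => c; rewrite /= /horner_eval hornerC.
have ev0P : map_mx (horner_eval 0) Pp = K.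
  by rewrite map_mxD map_mxZ !ev0C /= /horner_eval hornerX scale0r addr0.
have dl0 : horner_eval 0 dl = \det K by rewrite /dl -det_map_mx ev0P.
have dK : \det K != 0 by rewrite -unitfE -unitmxE.
have X0 : ('X : {poly F}) != 0 by rewrite polyX_eq0.
have D0 : D = 0.
  have := congr1 (map_mx (horner_eval 0)) H.
  rewrite map_mxD !map_mxZ ev0C map_mx0 /= dl0 horner_evalE hornerX scale0r addr0.
  by move=> /(congr1 (fun M => (\det K)^-1 *: M)); rewrite scalerA mulVf // scale1r scaler0.
split => //.
move: H; rewrite D0 map_mx0 scaler0 add0r => H.
have Z0 : Bp^T *m \adj Pp *m Bp = 0.
  exact: scale_eq0_mx X0 H.
set Kip := map_mx polyC (invmx K); set Np := map_mx polyC (invmx K *m A).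
have e1 : Kip *m Pp = 1%:M + 'X *: Np.
  by rewrite /Pp mulmxDr -scalemxAr -!map_mxM mulVmx // map_mx1.
have e2 : (1%:M + 'X *: Np) *m \adj Pp = dl *: Kip.
  by rewrite -e1 -mulmxA mul_mx_adj mul_mx_scalar.
have e3 : \adj Pp = dl *: Kip - 'X *: (Np *m \adj Pp).
  by move: e2; rewrite mulmxDl mul1mx -scalemxAl => <-; rewrite addrK.
pose S k := Bp^T *m (Np ^+ k *m \adj Pp) *m Bp.
pose T k := B^T *m ((invmx K *m A) ^+ k *m invmx K) *m B.
have eT k : Bp^T *m (Np ^+ k *m Kip) *m Bp = map_mx polyC (T k).
  by rewrite /T !map_mxM map_trmx map_mxX.
have eS k : S k = dl *: map_mx polyC (T k) - 'X *: S k.+1.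
  rewrite /S {1}e3 -eT !mulmxBr mulmxBl -!scalemxAr -!scalemxAl exprSr -mulmxE.
  by rewrite !mulmxA.
have ST k : S k = 0 -> T k = 0 /\ S k.+1 = 0.
  move=> Sk; have := congr1 (map_mx (horner_eval 0)) (eS k).
  rewrite Sk map_mx0 map_mxB !map_mxZ ev0C /= dl0 horner_evalE hornerX scale0r subr0.
  move=> /esym /(congr1 (fun M => (\det K)^-1 *: M)).
  rewrite scalerA mulVf // scale1r scaler0 => Tk.
  split => //; move: (eS k); rewrite Sk Tk map_mx0 scaler0 sub0r => /esym H1.
  by apply: scale_eq0_mx X0 _; apply/eqP; rewrite -oppr_eq0 H1.
have S0 k : S k = 0.
  elim: k => [|k IH]; first by rewrite /S expr0 -idmxE mul1mx.
  by have [] := ST k IH.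
move=> k; have [Tk _] := ST k (S0 k).
move: Tk; rewrite /T mulmxE (exprM_swap (invmx K) A k) -!mulmxE.
by rewrite !mulmxA.
Qed.

Lemma size_prod_le2 (F : fieldType) (I : Type) (s : seq I) (G : I -> {poly F}) :
  (forall i, (size (G i) <= 2)%N) -> (size (\prod_(i <- s) G i)%R <= (size s).+1)%N.
Proof.
move=> H; elim: s => [|x s IH]; first by rewrite big_nil size_poly1.
rewrite big_cons /=; apply: leq_trans (size_polyMleq _ _) _.
move: IH (H x) => IH Hx; have := leq_add Hx IH; case: (_ + _)%N => //= k.
Qed.

Lemma size_det_le (F : fieldType) n (Z : 'M[{poly F}]_n) :
  (forall a b, (size (Z a b) <= 2)%N) -> (size (\det Z) <= n.+1)%N.
Proof.
move=> H; rewrite /determinant.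
apply: (big_ind (fun p : {poly F} => (size p <= n.+1)%N)).
- by rewrite size_poly0.
- move=> p q Hp Hq; apply: leq_trans (size_polyD _ _) _; by rewrite geq_max Hp Hq.
- move=> s _; rewrite mulr_sign; case: (odd_perm s); rewrite ?size_polyN;
  (apply: leq_trans (size_prod_le2 _ _) _ => //;
   by rewrite [index_enum _]unlock -enumT size_enum_ord).
Qed.

Lemma mxE_scale (T : pzRingType) n1 n2 (a : T) (M : 'M[T]_(n1, n2)) i j :
  (a *: M) i j = a * M i j.
Proof. by rewrite mxE. Qed.

Lemma mxE_add (T : pzRingType) n1 n2 (M N : 'M[T]_(n1, n2)) i j :
  (M + N) i j = M i j + N i j.
Proof. by rewrite mxE. Qed.

Lemma map_mxE' (T S : Type) (f : T -> S) n1 n2 (M : 'M[T]_(n1, n2)) i j :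
  (map_mx f M) i j = f (M i j).
Proof. by rewrite mxE. Qed.

Lemma keyL (F : fieldType) r m (A K : 'M[F]_r) (B : 'M[F]_(r, m)) (D : 'M[F]_m) (s : seq F) :
  ~~ odd r -> uniq s -> size s = (r./2).+2 ->
  alternating K -> alternating A -> alternating D -> K \in unitmx ->
  (forall t : F, (\rank ((block_mx K (0 : 'M[F]_(r, m)) (0 : 'M[F]_(m, r)) (0 : 'M[F]_m)
                       + t *: block_mx A B (- B^T) D)%R) <= r)%N) ->
  forall i j : 'I_m,
  \det (map_mx polyC K + 'X *: map_mx polyC A) * (D i j)%:P +
  'X * ((map_mx polyC B)^T *m \adj (map_mx polyC K + 'X *: map_mx polyC A)
          *m map_mx polyC B) i j = 0.
Proof.
move=> evr us ss aK aA aD uK Hr i j.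
pose g := fun b : 'I_2 => if b == 0 then i else j.
pose V := colsub g (1%:M : 'M[F]_m).
pose C := B *m V. pose E := V^T *m D *m V.
pose G0 := block_mx K (0 : 'M[F]_(r, 2)) 0 (0 : 'M[F]_2).
pose G1 := block_mx A C (- C^T) E.
have aE : alternating E by apply: congr_alt.
have aG0 : alternating G0 by apply: alt_J.
have aG1 : alternating G1 by apply: alt_M.
have rk t : (\rank (G0 + t *: G1)%R <= r)%N.
  apply: leq_trans (Hr t).
  apply: (leq_trans _ (mxrankM_maxr (block_mx 1%:M 0 0 V)^T _)).
  apply: (leq_trans _ (mxrankM_maxl _ (block_mx 1%:M 0 0 V))).
  rewrite blk_congr; exact: leqnn.
pose Gp := map_mx polyC G0 + 'X *: map_mx polyC G1.
have GpE a b : Gp a b = (G0 a b)%:P + 'X * (G1 a b)%:P by rewrite !mxE.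
have evC t n1 n2 (M : 'M[F]_(n1, n2)) : map_mx (horner_eval t) (map_mx polyC M) = M.
  by rewrite -map_mx_comp map_mx_id // => c; rewrite /= horner_evalE hornerC.
have evG t : map_mx (horner_eval t) Gp = G0 + t *: G1.
  by rewrite map_mxD map_mxZ !evC /= horner_evalE hornerX.
have rts : all (root (\det Gp)) s.
  apply/allP => t _; rewrite /root -horner_evalE -det_map_mx evG.
  by apply/eqP; apply: det_rank_le (rk t).
have szd : (size (\det Gp) <= (r + 2).+1)%N.
  apply: size_det_le => a b; rewrite GpE; apply: leq_trans (size_polyD _ _) _.
  rewrite geq_max (leq_trans (size_polyC_leq1 _)) //= mulrC mul_polyC.
  by rewrite (leq_trans (size_scale_leq _ _)) // size_polyX.
pose GL := map_mx (@tofrac {poly F}) Gp.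
have aGL : alternating GL.
  have /alternatingP [d0 a0] := aG0; have /alternatingP [d1 a1] := aG1.
  have GLE a b : GL a b = tofrac (Gp a b) by rewrite /GL mxE.
  apply/alternatingP; split => [a | a b]; rewrite !GLE !GpE.
    by rewrite d0 d1 mulr0 addr0 rmorph0.
  by rewrite a0 a1 !polyCN mulrN -opprD rmorphN.
have [p [q [q0 Epq]]] : exists p q, q != 0 /\ \det Gp * q ^+ 2 = p ^+ 2.
  apply: frac_sq; have [sg Hsg] := alt_det_sq aGL; exists sg.
  by rewrite -Hsg /GL det_map_mx.
have dG0 : \det Gp = 0.
  apply/eqP; apply: contraT => dn0.
  have := count_roots us rts dn0 q0 Epq; rewrite ss.
  have hr : (2 * r./2)%N = r by rewrite mul2n -[RHS]odd_double_half (negbTE evr).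
  move: szd => h1 h2; have := leq_trans h2 h1; by rewrite !mulnS hr !add2n addn2 ltnNge leqnSn.
set x := tofrac ('X : {poly F}).
pose KL := map_mx (@tofrac {poly F}) (map_mx polyC K).
pose AL := map_mx (@tofrac {poly F}) (map_mx polyC A).
pose CL := map_mx (@tofrac {poly F}) (map_mx polyC C).
pose EL := map_mx (@tofrac {poly F}) (map_mx polyC E).
have GLE : GL = block_mx (KL + x *: AL) (x *: CL) (x *: - CL^T) (x *: EL).
  rewrite /GL /Gp map_mxD map_mxZ /G0 /G1 !map_block_mx !map_mx0 !map_mxN !map_trmx.
  by rewrite scale_block_mx add_block_mx !add0r.
pose Pp := map_mx polyC K + 'X *: map_mx polyC A.
have PLE : KL + x *: AL = map_mx (@tofrac {poly F}) Pp by rewrite /Pp map_mxD map_mxZ.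
have ev0P : map_mx (horner_eval 0) Pp = K.
  by rewrite map_mxD map_mxZ !evC /= horner_evalE hornerX scale0r addr0.
have dK : \det K != 0 by rewrite -unitfE -unitmxE.
have dPp : \det Pp != 0.
  by apply: contra_neq dK => H0; rewrite -[K]ev0P det_map_mx H0 rmorph0.
have uPL : (KL + x *: AL) \in unitmx by rewrite unitmxE unitfE PLE det_map_mx tofrac_eq0.
set PL := KL + x *: AL.
have aGL' : alternating (block_mx PL (x *: CL) (x *: - CL^T) (x *: EL)) by rewrite -GLE.
have := schur_alt aGL'; rewrite block_mxKul => /(_ uPL).
rewrite block_mxKur block_mxKdl block_mxKdr => aS.
set Sg := (x *: EL - x *: - CL^T *m invmx PL *m (x *: CL)).
have dS : \det Sg = 0.
  have : \det GL = 0 by rewrite /GL det_map_mx dG0 rmorph0.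
  rewrite GLE schur_det // => /eqP; rewrite mulf_eq0 => /orP [/eqP h|/eqP //].
  by move: uPL; rewrite unitmxE h unitr0.
have S01 : Sg 0 1 = 0.
  have /alternatingP [dS' aS'] := aS.
  move: dS; rewrite det22 !dS' (aS' 0 1) mul0r sub0r mulrN opprK => /eqP.
  by rewrite mulf_eq0 orbb => /eqP.
have SgE : Sg = x *: (EL + x *: (CL^T *m invmx PL *m CL)).
  by rewrite /Sg -!scalemxAl -scalemxAr !mulNmx !scalerN opprK scalerDr scalerA.
have x0 : x != 0 by rewrite tofrac_eq0 polyX_eq0.
pose N := CL^T *m \adj PL *m CL.
have H1 : \det PL * EL 0 1 + x * N 0 1 = 0.
  move: S01; rewrite SgE mxE_scale mxE_add mxE_scale.
  move=> /eqP; rewrite mulf_eq0 (negbTE x0) /= => /eqP H1.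
  have dPL : \det PL != 0 by rewrite -unitfE -unitmxE.
  move: H1; rewrite /invmx uPL -scalemxAr -scalemxAl mxE_scale -/N => H1.
  have := congr1 (fun z => \det PL * z) H1; rewrite mulr0 mulrDr => <-.
  by congr (_ + _); rewrite mulrCA mulVKf.
rewrite -/Pp; apply/eqP; rewrite -tofrac_eq0; apply/eqP.
rewrite rmorphD !rmorphM /= -det_map_mx -PLE -/PL.
have VpE : map_mx polyC V = colsub g (1%:M : 'M[{poly F}]_m).
  by apply/matrixP => a b; rewrite !mxE; case: eqP => _; rewrite ?rmorph1 ?rmorph0.
have eE : EL 0 1 = tofrac ((D i j)%:P) by rewrite /EL !map_mxE' /E sel_entry.
have eN : N 0 1 = tofrac (((map_mx polyC B)^T *m \adj Pp *m map_mx polyC B) i j).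
  rewrite /N /CL /PL PLE -map_mx_adj !map_trmx -!map_mxM map_mxE'; congr tofrac.
  rewrite /C trmx_mul !map_mxM -!map_trmx VpE.
  have mA (Vq : 'M[{poly F}]_(m, 2)) (Bq : 'M[{poly F}]_(r, m)) (Q : 'M[{poly F}]_r) :
    (Vq^T *m Bq^T) *m Q *m (Bq *m Vq) = Vq^T *m (Bq^T *m Q *m Bq) *m Vq.
    by rewrite !mulmxA.
  rewrite mA.
  by rewrite sel_entry.
by rewrite -eE -eN.
Qed.

(* n = r + m, blocks: first r indices, then m = n - r indices. *)
Theorem corollary9 (F : fieldType) (r m : nat)
  (A K : 'M[F]_r) (B : 'M[F]_(r, m)) (D : 'M[F]_m) :
  (0 < r)%N -> ~~ odd r ->
  card_gt F (r./2).+1 ->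
  alternating K -> alternating A -> alternating D ->
  K \in unitmx ->
  (forall t : F,
     (\rank ((block_mx K (0 : 'M[F]_(r, m)) (0 : 'M[F]_(m, r)) (0 : 'M[F]_m) + t *: block_mx A B (- B^T) D)%R) <= r)%N) ->
  D = 0 /\
  (forall k : nat,
     B^T *m invmx K *m (A *m invmx K) ^+ k *m B = 0).
Proof.
move=> _ evr cg aK aA aD uK Hr; case: cg => s [us ss].
apply: (stepF uK).
apply/matrixP => i j.
rewrite mxE_add !mxE_scale map_mxE' [in RHS]mxE.
exact: (keyL evr us ss aK aA aD uK Hr i j).
Qed.
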